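(* Let $n$ be even and $F\colon\mathbb F_2^n\to\mathbb F_2^n$ a quadratic APN function with linearity $L(F)=2^{\frac{n+l}{2}}$ where $l>n/2$. Then $F$ has exactly one component function with amplitude $2^{\frac{n+l}{2}}$, and all other non-trivial components have amplitude at most $2^{\frac{2n-l}{2}}$. In particular, any quadratic APN function $F\colon\mathbb F_2^n\to\mathbb F_2^n$ ($n$ even) has at most one component function with amplitude larger than $2^{3n/4}$.
   Context: $\langle\cdot,\cdot\rangle$ is the standard dot product. $F$ is APN if for every $a\ne0$ and $c$, $F(x)+F(x+a)=c$ has at most 2 solutions; quadratic if each component $F_b(x)=\langle b,F(x)\rangle$ is a quadratic form plus an affine function; $F_0$ is the trivial component. $W_F(b,a)=\sum_x(-1)^{F_b(x)+\langle x,a\rangle}$; linearity $L(F)=\max_{a,\,b\ne0}|W_F(b,a)|$. For quadratic $F$ and fixed $b$ there is $k$ with $|W_F(b,a)|\in\{0,2^{(n+k)/2}\}$ for all $a$; $2^{(n+k)/2}$ is the amplitude of $F_b$. *)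

(* Defs.v *)
From HB Require Import structures.
From mathcomp Require Import all_boot all_order all_algebra.
Set Implicit Arguments. Unset Strict Implicit. Unset Printing Implicit Defensive.
Import Order.TTheory GRing.Theory Num.Theory.
Local Open Scope ring_scope.

Notation vec n := 'rV['F_2]_n.

Definition dot n (u v : vec n) : 'F_2 := \sum_(i < n) u 0 i * v 0 i.

Definition component n (F : vec n -> vec n) (b : vec n) (x : vec n) : 'F_2 :=
  dot b (F x).

Definition APN n (F : vec n -> vec n) : Prop :=
  forall a c : vec n, a != 0 -> (#|[set x : vec n | (F x + F (x + a) == c)%R]| <= 2)%N.

Definition quad_form n (Q : 'M['F_2]_n) (x : vec n) : 'F_2 := (x *m Q *m x^T) 0 0.

Definition quadratic n (F : vec n -> vec n) : Prop :=
  forall b : vec n, exists (Q : 'M['F_2]_n) (c : vec n) (d : 'F_2),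
    forall x, component F b x = quad_form Q x + dot x c + d.

Definition sgnF2 (e : 'F_2) : int := if e == 0 then 1 else -1.

Definition walsh n (F : vec n -> vec n) (b a : vec n) : int :=
  \sum_(x : vec n) sgnF2 (component F b x + dot x a).

Definition linearity n (F : vec n -> vec n) : nat :=
  \max_(b : vec n | b != 0) \max_(a : vec n) `|walsh F b a|%N.

(* amplitude of F_b: the (common) nonzero value of |W_F(b,a)|, i.e. the max over a *)
Definition amplitude n (F : vec n -> vec n) (b : vec n) : nat :=
  \max_(a : vec n) `|walsh F b a|%N.

(* Main.v *)
Require Import Defs.
From mathcomp Require Import all_boot all_order all_algebra ring zify.
Set Implicit Arguments. Unset Strict Implicit. Unset Printing Implicit Defensive.
Import Order.TTheory GRing.Theory Num.Theory.
Local Open Scope ring_scope.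

Lemma F2P (u : 'F_2) : u = 0 \/ u = 1.
Proof. case: u => [[|[|m]]] Hm; [left|right|]; try exact: val_inj. by []. Qed.
Lemma F2_2 : (2 : 'F_2) = 0. Proof. by apply/eqP. Qed.
Lemma F2_4 : (4 : 'F_2) = 0. Proof. by apply/eqP. Qed.
Lemma F2_3 : (3 : 'F_2) = 1. Proof. by apply/eqP. Qed.
Ltac f2ring := ring: F2_2 F2_3 F2_4.
Lemma sgnD u v : sgnF2 (u + v) = sgnF2 u * sgnF2 v.
Proof. by case: (F2P u) => ->; case: (F2P v) => ->. Qed.
Lemma sgn1 u : sgnF2 (u + 1) = - sgnF2 u.
Proof. by case: (F2P u) => ->. Qed.
Lemma sgn0 : sgnF2 0 = 1. Proof. by []. Qed.

Section S.
Variable n : nat.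
Implicit Types x y z a b c : vec n.

Lemma vv (v : vec n) : v + v = 0.
Proof. apply/matrixP => i j; rewrite !mxE; case: (F2P (v i j)) => ->; by apply/eqP. Qed.

Lemma trD (u v : vec n) : (u + v)^T = u^T + v^T.
Proof. by apply/matrixP => i j; rewrite !mxE. Qed.

Lemma dotDl x y c : dot (x + y) c = dot x c + dot y c.
Proof. rewrite /dot -big_split; apply: eq_bigr => i _; by rewrite mxE mulrDl. Qed.
Lemma dotDr c x y : dot c (x + y) = dot c x + dot c y.
Proof. rewrite /dot -big_split; apply: eq_bigr => i _; by rewrite mxE mulrDr. Qed.
Lemma dot0l c : dot 0 c = 0.
Proof. rewrite /dot big1 // => i _; by rewrite mxE mul0r. Qed.
Lemma dot0r c : dot c 0 = 0.
Proof. rewrite /dot big1 // => i _; by rewrite mxE mulr0. Qed.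
Lemma dot_delta z (i : 'I_n) : dot z (delta_mx 0 i) = z 0 i.
Proof.
rewrite /dot (bigD1 i) //= mxE !eqxx mulr1 big1 ?addr0 // => j /negbTE ji.
by rewrite mxE ji andbF mulr0.
Qed.
Lemma dot_delta_l z (i : 'I_n) : dot (delta_mx 0 i) z = z 0 i.
Proof.
rewrite /dot (bigD1 i) //= mxE !eqxx mul1r big1 ?addr0 // => j /negbTE ji.
by rewrite mxE ji andbF mul0r.
Qed.

Lemma forall_dot_r z : [forall a, dot z a == 0] = (z == 0).
Proof.
apply/forallP/eqP => [H | -> a]; last by rewrite dot0l.
apply/rowP => i; rewrite mxE -dot_delta; exact/eqP.
Qed.
Lemma forall_dot_l (w : vec n) : [forall c, dot c w == 0] = (w == 0).
Proof.
apply/forallP/eqP => [H | -> a]; last by rewrite dot0r.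
apply/rowP => i; rewrite mxE -dot_delta_l; exact/eqP.
Qed.

Definition N := #|{: 'rV['F_2]_n}|.

Lemma charsum (A : {set vec n}) (phi : vec n -> 'F_2) :
  (forall x y, x \in A -> y \in A -> x + y \in A) ->
  (forall x y, x \in A -> y \in A -> phi (x + y) = phi x + phi y) ->
  \sum_(x in A) sgnF2 (phi x) = if [forall x in A, phi x == 0] then #|A|%:Z else 0.
Proof.
move=> cA aphi; case: ifP => [/forall_inP H | /negbT].
  rewrite (eq_bigr (fun _ => 1)) ?sumr_const ?natz // => x Ax.
  by rewrite (eqP (H x Ax)).
rewrite negb_forall_in => /exists_inP [x0 Ax0 nx0].
have phx0 : phi x0 = 1 by case: (F2P (phi x0)) nx0 => ->; rewrite ?eqxx.
set S := (\sum_(x in A) _).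
suff : S = - S by lia.
rewrite {1}/S (reindex_inj (addIr x0)) /= -sumrN.
rewrite (eq_bigl (fun x => x \in A)); last first.
  move=> x /=; apply/idP/idP => [Ax|Ax]; last exact: cA.
  by rewrite -[x]addr0 -(vv x0) addrA cA.
apply: eq_bigr => x Ax; by rewrite aphi // phx0 sgn1.
Qed.

Lemma charsumT (phi : vec n -> 'F_2) :
  (forall x y, phi (x + y) = phi x + phi y) ->
  \sum_x sgnF2 (phi x) = if [forall x, phi x == 0] then N%:Z else 0.
Proof.
move=> aphi; case: ifP => [/forallP H | /negbT].
  rewrite (eq_bigr (fun _ => 1)) ?sumr_const ?natz // => x _.
  by rewrite (eqP (H x)).
rewrite negb_forall => /existsP [x0 nx0].
have phx0 : phi x0 = 1 by case: (F2P (phi x0)) nx0 => ->; rewrite ?eqxx.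
set S := (\sum_x _).
suff : S = - S by lia.
rewrite {1}/S (reindex_inj (addIr x0)) /= -sumrN.
apply: eq_bigr => x _; by rewrite aphi // phx0 sgn1.
Qed.

Lemma sumdot_r z : \sum_a sgnF2 (dot z a) = if z == 0 then N%:Z else 0.
Proof. by rewrite charsumT ?forall_dot_r // => x y; rewrite dotDr. Qed.
Lemma sumdot_l (w : vec n) : \sum_c sgnF2 (dot c w) = if w == 0 then N%:Z else 0.
Proof. by rewrite charsumT ?forall_dot_l // => x y; rewrite dotDl. Qed.

Lemma cardN : N = (2 ^ n)%N.
Proof. by rewrite /N card_mx card_Fp // mul1n. Qed.
Lemma Npos : (0 < N)%N.
Proof. by apply/card_gt0P; exists 0. Qed.

Variable F : vec n -> vec n.
Hypothesis hq : quadratic F.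

Definition fb b x := component F b x.
Definition Bf b x z := fb b (x + z) + fb b x + fb b z + fb b 0.
Definition Vs b : {set vec n} := [set z | [forall x, Bf b x z == 0]].

Lemma mxDE (A B : 'M['F_2]_(1,1)) : (A + B) 0 0 = A 0 0 + B 0 0.
Proof. by rewrite mxE. Qed.
Lemma mx0E : (0 : 'M['F_2]_(1,1)) 0 0 = 0.
Proof. by rewrite mxE. Qed.

Implicit Types Q : 'M['F_2]_n.
Definition bil Q x z : 'F_2 := (x *m Q *m z^T) 0 0.
Lemma qfD Q x z : quad_form Q (x + z) = quad_form Q x + quad_form Q z + bil Q x z + bil Q z x.
Proof. rewrite /quad_form /bil trD !mulmxDl !mulmxDr !mxDE; ring. Qed.
Lemma qf0 Q : quad_form Q 0 = 0.
Proof. by rewrite /quad_form mul0mx mul0mx mx0E. Qed.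
Lemma bilDl Q x y z : bil Q (x + y) z = bil Q x z + bil Q y z.
Proof. by rewrite /bil !mulmxDl mxDE. Qed.
Lemma bilDr Q x y z : bil Q x (y + z) = bil Q x y + bil Q x z.
Proof. by rewrite /bil trD !mulmxDr mxDE. Qed.
Lemma bil0r Q x : bil Q x 0 = 0.
Proof. by rewrite /bil trmx0 mulmx0 mx0E. Qed.

Lemma Bform b : exists Q : 'M['F_2]_n, forall x z, Bf b x z = bil Q x z + bil Q z x.
Proof.
case: (hq b) => Q [c [d hf]]; exists Q => x z.
rewrite /Bf /fb !hf !qfD qf0 !dotDl dot0l.
f2ring.
Qed.

Lemma BfDl b x y z : Bf b (x + y) z = Bf b x z + Bf b y z.
Proof. case: (Bform b) => Q HQ; rewrite !HQ !bilDl !bilDr; ring. Qed.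
Lemma BfDr b x y z : Bf b x (y + z) = Bf b x y + Bf b x z.
Proof. case: (Bform b) => Q HQ; rewrite !HQ !bilDl !bilDr; ring. Qed.
Lemma Bf0 b x : Bf b x 0 = 0.
Proof.
case: (Bform b) => Q HQ; rewrite HQ bil0r.
have -> : bil Q 0 x = 0 by rewrite /bil mul0mx mul0mx mx0E.
by rewrite addr0.
Qed.

Lemma Vs_add b y z : y \in Vs b -> z \in Vs b -> y + z \in Vs b.
Proof.
rewrite !inE => /forallP Hy /forallP Hz; apply/forallP => x.
by rewrite BfDr (eqP (Hy x)) (eqP (Hz x)) addr0.
Qed.
Lemma Vs0 b : 0 \in Vs b.
Proof. by rewrite inE; apply/forallP => x; rewrite Bf0. Qed.

Lemma sumB b z : \sum_x sgnF2 (Bf b x z) = if z \in Vs b then N%:Z else 0.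
Proof. by rewrite inE charsumT // => x y; rewrite BfDl. Qed.

Definition hW b a z := fb b z + fb b 0 + dot z a.

Lemma walsh2 b a : walsh F b a ^+ 2 = N%:Z * \sum_(z in Vs b) sgnF2 (hW b a z).
Proof.
rewrite expr2 /walsh mulr_suml.
transitivity (\sum_x \sum_z sgnF2 (Bf b x z) * sgnF2 (hW b a z)).
  apply: eq_bigr => x _; rewrite mulr_sumr (reindex_inj (addrI x)) /=.
  apply: eq_bigr => z _; rewrite -!sgnD; congr sgnF2.
  rewrite /Bf /hW /fb !dotDl. f2ring.
rewrite exchange_big /= mulr_sumr [RHS]big_mkcond /=; apply: eq_bigr => z _.
rewrite -mulr_suml sumB; case: ifP => _; by rewrite ?mul0r // mulrC.
Qed.

Lemma sumV b a : \sum_(z in Vs b) sgnF2 (hW b a z) =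
  if [forall z in Vs b, hW b a z == 0] then #|Vs b|%:Z else 0.
Proof.
apply: charsum; first exact: Vs_add.
move=> y z hy; rewrite inE => /forallP /(_ y) /eqP H.
move: H; rewrite /Bf /hW dotDl => H. have H2 : fb b (y + z) = fb b y + fb b z + fb b 0 by rewrite -[LHS]addr0 -H; f2ring. rewrite H2; f2ring.
Qed.

Lemma walsh2_cases b a : walsh F b a ^+ 2 = 0 \/ walsh F b a ^+ 2 = (N * #|Vs b|)%N%:Z.
Proof.
rewrite walsh2 sumV; case: ifP => _; [right; by rewrite PoszM | left; by rewrite mulr0].
Qed.

Lemma parseval b : \sum_a walsh F b a ^+ 2 = (N * N)%N%:Z.
Proof.
under eq_bigr do rewrite walsh2.
rewrite -mulr_sumr exchange_big /=.
have -> : \sum_(z in Vs b) \sum_a sgnF2 (hW b a z) =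
          \sum_(z in Vs b) sgnF2 (fb b z + fb b 0) * (if z == 0 then N%:Z else 0).
  apply: eq_bigr => z _; rewrite -sumdot_r mulr_sumr; apply: eq_bigr => a _.
  by rewrite /hW sgnD.
rewrite (bigD1 0) ?Vs0 //= eqxx big1 => [|z /andP [_ /negbTE ->]]; last by rewrite mulr0.
have -> : fb b 0 + fb b 0 = 0 by f2ring.
by rewrite sgn0 mul1r addr0 PoszM.
Qed.

Lemma amp_sq b : (amplitude F b ^ 2 = N * #|Vs b|)%N.
Proof.
set K := (N * #|Vs b|)%N.
have Kpos : (0 < K)%N.
  by rewrite muln_gt0 Npos /=; apply/card_gt0P; exists 0; exact: Vs0.
have hsq : forall a, (`|walsh F b a| ^ 2)%N = 0%N \/ (`|walsh F b a| ^ 2)%N = K.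
  by move=> a; rewrite -abszX; case: (walsh2_cases b a) => ->; [left|right].
have [a0 Ha0] : exists a, (`|walsh F b a| ^ 2)%N = K.
  case: (boolP [exists a, (`|walsh F b a| ^ 2)%N == K]) => [/existsP [a /eqP] | /existsPn H].
    by exists a.
  exfalso.
  have : \sum_a walsh F b a ^+ 2 = 0.
    apply: big1 => a _; case: (walsh2_cases b a) => // h.
    by move: (H a); rewrite -abszX h /= eqxx.
  rewrite parseval => /eqP; rewrite eqz_nat muln_eq0 orbb.
  by have := Npos; case: N.
have [a1 Ha1] := bigop.eq_bigmax (fun a => `|walsh F b a|%N) (Npos).
rewrite /amplitude Ha1; case: (hsq a1) => // h0.
have := leq_bigmax (F := fun a => `|walsh F b a|%N) a0; rewrite Ha1 => le.
have le2 : (`|walsh F b a0| ^ 2 <= `|walsh F b a1| ^ 2)%N by rewrite !expnS expn0 !muln1; exact: leq_mul.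
by move: le2 Kpos; rewrite h0 Ha0 leqn0 => /eqP ->.
Qed.

Hypothesis ha : APN F.

Lemma ker_le2 z : z != 0 -> (#|[set x | (F (x + z) + F x + F z + F 0 == 0)%R]| <= 2)%N.
Proof.
move=> nz; apply: (leq_trans _ (ha (F z + F 0) nz)); apply: subset_leq_card.
apply/subsetP => x; rewrite !inE => /eqP H; apply/eqP.
apply/matrixP => i j; move/matrixP: H => /(_ i j); rewrite !mxE => H.
have H2 : F (x + z) i j = F x i j + F z i j + F 0 i j by rewrite -[LHS]addr0 -H; f2ring.
rewrite H2; f2ring.
Qed.

Lemma sum_if (P : {set vec n}) : \sum_x (if x \in P then N%:Z else 0) = (N * #|P|)%N%:Z.
Proof. by rewrite -big_mkcond sumr_const -mulr_natr natz PoszM. Qed.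

Lemma inter b b' z : b != 0 -> b' != 0 -> b != b' -> z \in Vs b -> z \in Vs b' -> z = 0.
Proof.
move=> nb nb' nbb' zb zb'; case: (eqVneq z 0) => // nz; exfalso.
set K := [set x | F (x + z) + F x + F z + F 0 == 0].
set C := [set c | z \in Vs c].
have e1 : \sum_c \sum_x sgnF2 (dot c (F (x + z) + F x + F z + F 0)) = (N * #|K|)%N%:Z.
  rewrite exchange_big /= -sum_if; apply: eq_bigr => x _.
  by rewrite sumdot_l inE.
have e2 : \sum_c \sum_x sgnF2 (dot c (F (x + z) + F x + F z + F 0)) = (N * #|C|)%N%:Z.
  rewrite -sum_if; apply: eq_bigr => c _.
  rewrite inE -sumB; apply: eq_bigr => x _; congr sgnF2.
  by rewrite /Bf /fb /component !dotDr.
have eKC : #|K| = #|C|.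
  move: e2; rewrite e1 => -[] /eqP; rewrite eqn_pmul2l ?Npos //; exact/eqP.
have C3 : (3 <= #|C|)%N.
  have sub : [set 0; b; b'] \subset C.
    apply/subsetP => c Hc; rewrite inE.
    move: Hc; rewrite !inE => /orP [/orP [] | ] /eqP ->; [| by rewrite inE in zb | by rewrite inE in zb'].
    apply/forallP => x; by rewrite /Bf /fb /component !dot0l !addr0.
  apply: leq_trans (subset_leq_card sub).
  have h0b : (0 == b) = false by rewrite eq_sym (negbTE nb).
  have h0b' : (0 == b') = false by rewrite eq_sym (negbTE nb').
  have hb'b : (b' == b) = false by rewrite eq_sym (negbTE nbb').
  by rewrite setUC cardsU1 cards2 !inE h0b (negbTE nb') hb'b.
have := ker_le2 nz; rewrite -/K eKC; move: C3; lia.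
Qed.

Lemma prod_le b b' : b != 0 -> b' != 0 -> b != b' -> (#|Vs b| * #|Vs b'| <= N)%N.
Proof.
move=> nb nb' nbb'; rewrite -cardsX.
have inj : {in setX (Vs b) (Vs b') &, injective (fun p : vec n * vec n => p.1 + p.2)}.
  move=> [u v] [u' v']; rewrite !in_setX /= => /andP [hu hv] /andP [hu' hv'] e.
  have e2 : u + u' = v + v'.
    apply/matrixP => i j; move/matrixP: e => /(_ i j); rewrite !mxE => e.
    have e3 : u i j = u' i j + v' i j + v i j by rewrite -e; f2ring.
    rewrite e3; f2ring.
  have hvv : v + v' = 0.
    apply: (inter nb nb' nbb'); last exact: Vs_add hv hv'.
    by rewrite -e2; exact: Vs_add hu hu'.
  have huu : u + u' = 0 by rewrite e2.
  have eq0 : forall p q : vec n, p + q = 0 -> p = q.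
    move=> p q pq; apply/matrixP => i j; move/matrixP: pq => /(_ i j); rewrite !mxE => pq.
    by rewrite -[LHS]addr0 -pq; f2ring.
  by rewrite (eq0 _ _ hvv) (eq0 _ _ huu).
rewrite -(card_in_imset inj); exact: max_card.
Qed.

End S.

Theorem mainTheorem6 (n : nat) (F : vec n -> vec n) :
  ~~ odd n -> quadratic F -> APN F ->
  (forall l : nat, (linearity F ^ 2 = 2 ^ (n + l))%N -> (n < 2 * l)%N ->
     (exists b0 : vec n,
        [/\ b0 != 0, (amplitude F b0 ^ 2 = 2 ^ (n + l))%N &
            forall b : vec n, b != 0 -> b != b0 ->
              (amplitude F b ^ 2 <= 2 ^ (2 * n - l))%N]))
  /\
  (forall b1 b2 : vec n, b1 != 0 -> b2 != 0 ->
     (2 ^ (3 * n) < amplitude F b1 ^ 4)%N ->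
     (2 ^ (3 * n) < amplitude F b2 ^ 4)%N -> b1 = b2).
Proof.
move=> _ hq ha.
have cN := cardN n.
have hamp := amp_sq hq.
have hV0 : forall b, (0 < #|Vs F b|)%N by move=> b; apply/card_gt0P; exists 0; exact: Vs0.
split.
- move=> l hl _.
  have [b0 nb0 hb0] : exists2 b0 : vec n, b0 != 0 & linearity F = amplitude F b0.
    case: (posnP #|[pred b : vec n | b != 0]|) => h.
      exfalso; move: hl; rewrite /linearity big_pred0; last by move=> b; apply: (card0_eq h).
      by move/esym/eqP; rewrite expn_eq0.
    have [b0 hb0 e] := bigop.eq_bigmax_cond (fun b => amplitude F b) h.
    by exists b0 => //; exact: e.
  have hpos : forall k, (0 < 2 ^ k)%N by move=> k; rewrite expn_gt0.
  have e0 : #|Vs F b0| = (2 ^ l)%N.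
    have := hamp b0; rewrite -hb0 hl cN expnD => /eqP; rewrite eqn_pmul2l // => /eqP <-.
    by [].
  exists b0; split => //; first by rewrite -hb0.
  move=> b nb nbb0.
  have hpl := prod_le hq ha nb nb0 nbb0.
  rewrite e0 cN in hpl.
  have lln : (l <= n)%N.
    rewrite -(leq_exp2l _ _ (isT : (1 < 2)%N)); apply: leq_trans hpl.
    by rewrite leq_pmull.
  rewrite hamp cN (_ : (2 * n - l = n + (n - l))%N); last by lia.
  rewrite expnD leq_pmul2l // -(leq_pmul2r (hpos l)) -expnD subnK //.
- move=> b1 b2 nb1 nb2 h1 h2; case: (eqVneq b1 b2) => // nb12; exfalso.
  have hp := prod_le hq ha nb1 nb2 nb12.
  have e4 : forall m, (m ^ 4 = (m ^ 2) ^ 2)%N by move=> m; rewrite -expnM.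
  have e3 : (2 ^ (3 * n) = (2 ^ n) ^ 3)%N by rewrite mulnC expnM.
  move: h1 h2; rewrite !e4 !hamp e3 -cN.
  have := Npos n.
  move: (N n) (#|Vs F b1|) (#|Vs F b2|) hp => P K1 K2 hp Ppos h1 h2.
  have P2 : (0 < P ^ 2)%N by rewrite expn_gt0 Ppos.
  move: h1 h2; rewrite !expnMn expnSr !ltn_pmul2l // => a1 a2.
  have := ltn_mul a1 a2; rewrite -expnMn.
  move=> l2; have l1 := leq_mul hp hp; rewrite expnS expn1 in l2.
  by rewrite ltnNge l1 in l2.
Qed.
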